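(* Let $\alpha,\beta,\gamma\in\Bbbk^n$ and $\mathcal H=\mathcal H(\alpha,\beta,\gamma)$. If $\beta_i=0$ for some $i\in Q_0$, then $\mathcal H$ is not noetherian.
   Context: $\Bbbk$ is an algebraically closed field of characteristic zero. Fix $n\ge1$; indices mod $n$, $Q_0=\{0,\dots,n-1\}$. $Q$ is the quiver with vertices $Q_0$ and arrows $u_i:i\to i+1$, $d_i:i+1\to i$; paths are written left to right, $e_i$ is the trivial path at $i$. $\mathcal H(\alpha,\beta,\gamma)$ is $\Bbbk Q$ modulo the relations $d_{i-1}u_{i-1}u_i=\alpha_iu_id_iu_i+\beta_iu_iu_{i+1}d_{i+1}+\gamma_iu_i$ and $d_id_{i-1}u_{i-1}=\alpha_id_iu_id_i+\beta_iu_{i+1}d_{i+1}d_i+\gamma_id_i$ for all $i\in Q_0$. *)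

(* Defs.v *)
From HB Require Import structures.
From mathcomp Require Import all_boot all_order all_algebra.
Set Implicit Arguments. Unset Strict Implicit. Unset Printing Implicit Defensive.
Import Order.TTheory GRing.Theory Num.Theory.
Local Open Scope ring_scope.

(* Vertices Q_0 = 'I_n; i+1 and i-1 are taken mod n (ordS / ord_pred). *)

(* Elements e_i, u_i, d_i of a k-algebra B satisfy the defining relations of the
   path algebra kQ (left-to-right path composition = multiplication in B):
   e_i are orthogonal idempotents summing to 1, u_i : i -> i+1, d_i : i+1 -> i. *)
Definition quiver_rels (k : fieldType) (n : nat) (B : algType k)
    (e u d : 'I_n -> B) : Prop :=
  [/\ forall i j : 'I_n, e i * e j = (if i == j then e i else 0),
      \sum_(i < n) e i = 1,
      forall i : 'I_n, e i * u i = u i /\ u i * e (ordS i) = u i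
    & forall i : 'I_n, e (ordS i) * d i = d i /\ d i * e i = d i].

Definition H_rels (k : fieldType) (n : nat) (alpha beta gamma : 'I_n -> k)
    (B : algType k) (u d : 'I_n -> B) : Prop :=
  forall i : 'I_n,
    d (ord_pred i) * u (ord_pred i) * u i
      = alpha i *: (u i * d i * u i) + beta i *: (u i * u (ordS i) * d (ordS i))
        + gamma i *: u i
    /\ d i * d (ord_pred i) * u (ord_pred i)
      = alpha i *: (d i * u i * d i) + beta i *: (u (ordS i) * d (ordS i) * d i)
        + gamma i *: d i.

Definition is_alg_morphism (k : fieldType) (A B : algType k) (f : A -> B) : Prop :=
  [/\ forall (a : k) (x y : A), f (a *: x + y) = a *: f x + f y,
      f 1 = 1
    & forall x y : A, f (x * y) = f x * f y].

(* A, together with e, u, d, is a presentation of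
   H(alpha,beta,gamma) = kQ / (relations), i.e. A is the k-algebra generated by
   e, u, d subject exactly to the quiver relations and the relations of H:
   A is generated by them, they satisfy the relations, and (universal property)
   any k-algebra with elements satisfying the relations receives a k-algebra
   morphism from A sending generators to those elements. *)
Definition is_H_algebra (k : fieldType) (n : nat) (alpha beta gamma : 'I_n -> k)
    (A : algType k) (e u d : 'I_n -> A) : Prop :=
  [/\ quiver_rels e u d,
      H_rels alpha beta gamma u d,
      (forall S : A -> Prop,
          (forall i, S (e i)) -> (forall i, S (u i)) -> (forall i, S (d i)) ->
          S 1 -> (forall (a : k) x y, S x -> S y -> S (a *: x + y)) ->
          (forall x y, S x -> S y -> S (x * y)) ->
          forall x, S x)
    & forall (B : algType k) (e' u' d' : 'I_n -> B),
        quiver_rels e' u' d' -> H_rels alpha beta gamma u' d' ->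
        exists f : A -> B, is_alg_morphism f /\
          forall i, [/\ f (e i) = e' i, f (u i) = u' i & f (d i) = d' i]].

Definition left_ideal (R : pzRingType) (I : R -> Prop) : Prop :=
  [/\ I 0, (forall x y, I x -> I y -> I (x + y)) & forall a x, I x -> I (a * x)].

Definition right_ideal (R : pzRingType) (I : R -> Prop) : Prop :=
  [/\ I 0, (forall x y, I x -> I y -> I (x + y)) & forall a x, I x -> I (x * a)].

Definition acc_chain_stabilizes (R : Type) (P : (R -> Prop) -> Prop) : Prop :=
  forall N : nat -> R -> Prop,
    (forall m, P (N m)) -> (forall m x, N m x -> N m.+1 x) ->
    exists m0, forall m, (m0 <= m)%N -> forall x, N m x <-> N m0 x.

Definition left_noetherian (R : pzRingType) : Prop :=
  acc_chain_stabilizes (@left_ideal R).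
Definition right_noetherian (R : pzRingType) : Prop :=
  acc_chain_stabilizes (@right_ideal R).
Definition noetherian (R : pzRingType) : Prop :=
  left_noetherian R /\ right_noetherian R.

(* Main.v *)
Require Import Defs.
From HB Require Import structures.
From mathcomp Require Import all_boot all_order all_algebra.
From mathcomp Require Import boolp.
From mathcomp Require Import ring.
Import GRing.Theory.
Local Open Scope ring_scope.

Module Helpers.
Set Implicit Arguments. Unset Strict Implicit. Unset Printing Implicit Defensive.

Section OpAlg.
Variable k : fieldType.

Definition Op := nat -> {poly k}.
HB.instance Definition _ := gen_eqMixin Op.
HB.instance Definition _ := gen_choiceMixin Op.

Definition op0 : Op := fun _ => 0.
Definition opadd (S T : Op) : Op := fun t => S t + T t.
Definition opopp (S : Op) : Op := fun t => - S t.

Lemma opaddA : associative opadd.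
Proof. by move=> x y z; apply: funext => t; rewrite /opadd addrA. Qed.
Lemma opaddC : commutative opadd.
Proof. by move=> x y; apply: funext => t; rewrite /opadd addrC. Qed.
Lemma opadd0 : left_id op0 opadd.
Proof. by move=> x; apply: funext => t; rewrite /opadd /op0 add0r. Qed.
Lemma opaddN : left_inverse op0 opopp opadd.
Proof. by move=> x; apply: funext => t; rewrite /opadd /op0 /opopp addNr. Qed.

HB.instance Definition _ := GRing.isZmodule.Build Op opaddA opaddC opadd0 opaddN.

Definition opscale (a : k) (S : Op) : Op := fun t => a *: S t.
Lemma opscaleA a b v : opscale a (opscale b v) = opscale (a * b) v.
Proof. by apply: funext => t; rewrite /opscale scalerA. Qed.
Lemma opscale1 : left_id 1 opscale.
Proof. by move=> x; apply: funext => t; rewrite /opscale scale1r. Qed.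
Lemma opscaleDr : right_distributive opscale +%R.
Proof. by move=> a x y; apply: funext => t; rewrite /opscale /= /opadd scalerDr. Qed.
Lemma opscaleDl v : {morph opscale^~ v: a b / a + b}.
Proof. by move=> a b; apply: funext => t; rewrite /opscale /= /opadd scalerDl. Qed.

HB.instance Definition _ := GRing.Zmodule_isLmodule.Build k Op opscaleA opscale1 opscaleDr opscaleDl.

Definition ext (T : Op) (p : {poly k}) : {poly k} := \sum_(j < size p) p`_j *: T j.

Lemma ext_wide (T : Op) (p : {poly k}) N : (size p <= N)%N -> ext T p = \sum_(j < N) p`_j *: T j.
Proof.
move=> hN; rewrite /ext (big_ord_widen _ (fun j => p`_j *: T j) hN).
rewrite [RHS](bigID (fun j : 'I_N => (j < size p)%N)) /= [X in _ = _ + X]big1 ?addr0 //.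
by move=> j; rewrite -leqNgt => hj; rewrite nth_default // scale0r.
Qed.

Lemma extD (T : Op) (p q : {poly k}) : ext T (p + q) = ext T p + ext T q.
Proof.
set N := maxn (size p) (size q).
have hp : (size p <= N)%N by rewrite leq_maxl.
have hq : (size q <= N)%N by rewrite leq_maxr.
have hpq : (size (p + q)%R <= N)%N by exact: size_polyD.
rewrite (ext_wide _ hp) (ext_wide _ hq) (ext_wide _ hpq) -big_split /=.
by apply: eq_bigr => j _; rewrite coefD scalerDl.
Qed.

Lemma extZ (T : Op) a (p : {poly k}) : ext T (a *: p) = a *: ext T p.
Proof.
rewrite (ext_wide _ (size_scale_leq a p)) /ext scaler_sumr.
by apply: eq_bigr => j _; rewrite coefZ scalerA.
Qed.

Lemma ext0 T : ext T 0 = 0.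
Proof. by rewrite /ext size_poly0 big_ord0. Qed.

Lemma ext_sum T (I : Type) (r : seq I) (P : pred I) (F : I -> {poly k}) :
  ext T (\sum_(i <- r | P i) F i) = \sum_(i <- r | P i) ext T (F i).
Proof.
elim/big_rec2: _ => [|i y p _ <-]; first by rewrite ext0.
by rewrite extD.
Qed.

Lemma extXn T t : ext T 'X^t = T t.
Proof.
rewrite (ext_wide _ (leqnn _)) size_polyXn (bigD1 (Ordinal (ltnSn t))) //=.
rewrite coefXn eqxx scale1r big1 ?addr0 // => j hj.
rewrite coefXn; case: eqP => [hjt|]; last by rewrite scale0r.
by exfalso; move: hj; apply/negP; rewrite negbK; apply/eqP/val_inj.
Qed.

Lemma extZXn T c t : ext T (c *: 'X^t) = c *: T t.
Proof. by rewrite extZ extXn. Qed.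

Lemma ext_addT S T p : ext (S + T) p = ext S p + ext T p.
Proof. by rewrite /ext -big_split; apply: eq_bigr => j _; rewrite /= /opadd scalerDr. Qed.

Lemma ext_scaleT a T p : ext (a *: T) p = a *: ext T p.
Proof.
rewrite /ext scaler_sumr; apply: eq_bigr => j _.
by rewrite scalerA mulrC -scalerA.
Qed.

Definition opmul (S T : Op) : Op := fun t => ext T (S t).
Definition op1 : Op := fun t => 'X^t.

Lemma opmulA : associative opmul.
Proof.
move=> S T R; apply: funext => t; rewrite /opmul.
rewrite {2}/ext ext_sum; apply: eq_bigr => j _.
by rewrite extZ.
Qed.
Lemma opmul1 : left_id op1 opmul.
Proof. by move=> S; apply: funext => t; rewrite /opmul /op1 extXn. Qed.
Lemma opmulr1 : right_id op1 opmul.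
Proof.
move=> S; apply: funext => t; rewrite /opmul /op1 /ext.
by rewrite -poly_def coefK.
Qed.
Lemma opmulDl : left_distributive opmul +%R.
Proof. by move=> S T R; apply: funext => t; rewrite /opmul /= /opadd extD. Qed.
Lemma opmulDr : right_distributive opmul +%R.
Proof. by move=> S T R; apply: funext => t; rewrite /opmul /= /opadd ext_addT. Qed.
Lemma op1_neq0 : op1 != 0.
Proof.
apply/eqP => h; have := congr1 (fun f : Op => f 0%N) h.
by rewrite /op1 /= /op0 expr0; apply/eqP; exact: oner_neq0.
Qed.

HB.instance Definition _ := GRing.Zmodule_isNzRing.Build Op opmulA opmul1 opmulr1 opmulDl opmulDr op1_neq0.

Lemma opscaleAl (a : k) (u v : Op) : a *: (u * v) = (a *: u) * v.
Proof. by apply: funext => t; exact: (esym (extZ _ _ _)). Qed.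
HB.instance Definition _ := GRing.Lmodule_isLalgebra.Build k Op opscaleAl.
Lemma opscaleAr (a : k) (u v : Op) : a *: (u * v) = u * (a *: v).
Proof. by apply: funext => t; exact: (esym (ext_scaleT _ _ _)). Qed.
HB.instance Definition _ := GRing.Lalgebra_isAlgebra.Build k Op opscaleAr.

Lemma OpmulE (S T : Op) t : (S * T) t = ext T (S t). Proof. by []. Qed.
Lemma OpaddE (S T : Op) t : (S + T) t = S t + T t. Proof. by []. Qed.
Lemma OpscaleE a (S : Op) t : (a *: S) t = a *: S t. Proof. by []. Qed.
Lemma OpoppE (S : Op) t : (- S) t = - S t. Proof. by []. Qed.
Lemma Op0E t : (0 : Op) t = 0. Proof. by []. Qed.
Lemma Op1E t : (1 : Op) t = 'X^t. Proof. by []. Qed.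
End OpAlg.



Section Rep.
Variable k : fieldType.
Variable n : nat.
Variables alpha beta gamma : 'I_n -> k.
Variable i0 : 'I_n.

Definition vert (t : nat) : 'I_n := iter t (@ord_pred n) i0.
Arguments vert : simpl never.
Lemma vertS t : vert t.+1 = ord_pred (vert t). Proof. by rewrite /vert iterS. Qed.
Lemma vert0 : vert 0 = i0. Proof. by rewrite /vert. Qed.

Fixpoint qp (t : nat) : k * k :=
  match t with
  | 0 => (gamma i0 + 1, 0)
  | t'.+1 => let: (a, b) := qp t' in
     (alpha (vert t'.+1) * a + beta (vert t'.+1) * b + gamma (vert t'.+1), a)
  end.
Definition q t := (qp t).1.
Definition qm t := (qp t).2.
Lemma qS t : q t.+1 = alpha (vert t.+1) * q t + beta (vert t.+1) * qm t + gamma (vert t.+1).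
Proof. by rewrite /q /qm /=; case: (qp t). Qed.
Lemma qmS t : qm t.+1 = q t.
Proof. by rewrite /q /qm /=; case: (qp t). Qed.
Lemma qm0 : qm 0 = 0. Proof. by []. Qed.
Lemma q0 : q 0 = gamma i0 + 1. Proof. by []. Qed.

Definition E (i : 'I_n) : Op k := fun t => if vert t == i then 1 *: 'X^t else 0.
Definition U (i : 'I_n) : Op k := fun t => if (vert t == i) && (0 < t)%N then 1 *: 'X^(t.-1) else 0.
Definition Dn (i : 'I_n) : Op k := fun t => if vert t.+1 == i then q t *: 'X^(t.+1) else 0.

Lemma ext_if (T : Op k) (b : bool) c s :
  ext T (if b then c *: 'X^s else 0) = if b then c *: T s else 0.
Proof. by case: b; rewrite ?extZXn ?ext0. Qed.

Lemma scale_if (b : bool) (c d : k) s :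
  c *: (if b then d *: 'X^s else 0 : {poly k}) = if b then (c * d) *: 'X^s else 0.
Proof. by case: b; rewrite ?scalerA ?scaler0. Qed.

Lemma predE (x i : 'I_n) : (ord_pred x == ord_pred i) = (x == i).
Proof. exact: (inj_eq (@ord_pred_inj n)). Qed.
Lemma predSE (x i : 'I_n) : (ord_pred x == i) = (x == ordS i).
Proof. by apply/eqP/eqP => [<-|->]; rewrite ?ord_predK ?ordSK. Qed.

Ltac simp := rewrite ?OpmulE ?OpaddE ?OpscaleE ?OpoppE ?Op0E /E /U /Dn ?ext_if ?scale_if ?vertS /=.

Lemma EE i t : E i t = if vert t == i then 1 *: 'X^t else 0. Proof. by []. Qed.
Lemma UE i t : U i t = if (vert t == i) && (0 < t)%N then 1 *: 'X^(t.-1) else 0. Proof. by []. Qed.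
Lemma DnE i t : Dn i t = if vert t.+1 == i then q t *: 'X^(t.+1) else 0. Proof. by []. Qed.
Lemma ext_if2 (T : Op k) (b : bool) (x : {poly k}) :
  ext T (if b then x else 0) = if b then ext T x else 0.
Proof. by case: b; rewrite ?ext0. Qed.
Lemma scale_if2 (b : bool) (c : k) (x : {poly k}) :
  c *: (if b then x else 0) = if b then c *: x else 0.
Proof. by case: b; rewrite ?scaler0. Qed.

Ltac simp2 := rewrite ?(OpmulE, OpaddE, OpscaleE, OpoppE, Op0E);
  rewrite ?(EE, UE, DnE, ext_if2, scale_if2, extZXn, scalerA, ext0, vertS, predE, predSE).

Lemma quiverE : quiver_rels E U Dn.
Proof.
split.
- move=> i j; apply: funext => t; simp.
  case: (i =P j) => [<-|ne].
    by case: (vert t == i); rewrite ?mul1r.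
  by rewrite Op0E; case: (vert t =P i) => // ->; case: (i =P j).
- apply: funext => t.
  have -> : (\sum_(i < n) E i) t = \sum_(i < n) E i t.
    by elim/big_rec2: _ => // i y p _ <-.
  rewrite (bigD1 (vert t)) //= big1 ?addr0; first by rewrite /E eqxx scale1r Op1E.
  by move=> i /negbTE; rewrite /E eq_sym => ->.
- move=> i; split; apply: funext => t; simp.
  + by case: (vert t == i); rewrite //= mul1r.
  + case: t => [|t] /=; first by rewrite andbF.
    case: (vert t.+1 =P i) => //= h; rewrite mul1r.
    by move: h; rewrite vertS => <-; rewrite ord_predK eqxx.
- move=> i; split; apply: funext => t; simp.
  + by rewrite predSE; case: (vert t == ordS i); rewrite ?mul1r.
  + by case: (ord_pred (vert t) == i); rewrite ?mulr1.
Qed.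

Lemma HrelsE : H_rels alpha beta gamma U Dn.
Proof.
move=> i; split; apply: funext => t; simp2.
- case: t => [|[|s]]; rewrite /= ?vertS ?predSE ?andbT ?andbF /=.
  + by case: (vert 0 == i); rewrite /= !addr0.
  + case: (vert 0 =P ordS i) => h /=; last by rewrite !addr0.
    have hv : vert 1 = i by rewrite vertS h ordSK.
    rewrite addr0 -!scalerDl; congr (_ *: _).
    by rewrite qS qm0 hv; ring.
  + case: (vert s =P ordS (ordS i)) => h /=; last by rewrite !addr0.
    have hv : vert s.+2 = i by rewrite !vertS h !ordSK.
    rewrite -!scalerDl; congr (_ *: _).
    by rewrite qS qmS hv; ring.
- case: t => [|s]; rewrite /= ?vertS ?predSE ?andbT ?andbF /=.
  + case: (vert 0 =P ordS i) => h /=; last by rewrite !addr0.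
    have hv : vert 1 = i by rewrite vertS h ordSK.
    rewrite addr0 -!scalerDl; congr (_ *: _).
    by rewrite qS qm0 hv; ring.
  + case: (vert s =P ordS (ordS i)) => h /=; last by rewrite !addr0.
    have hv : vert s.+2 = i by rewrite !vertS h !ordSK.
    rewrite -!scalerDl; congr (_ *: _).
    by rewrite (qS s.+1) qmS hv; ring.
Qed.

Fixpoint PB (j : nat) : Op k :=
  match j with 0 => E i0 | j'.+1 => U (vert j'.+1) * PB j' end.

Definition WB : Op k :=
  Dn (ord_pred i0) * U (ord_pred i0) - alpha i0 *: (U i0 * Dn i0) - gamma i0 *: E i0.

Lemma PBE j t : PB j t = if (vert t == vert j) && (j <= t)%N then 1 *: 'X^(t - j) else 0.
Proof.
elim: j t => [|j IH] t /=; first by rewrite EE vert0 subn0 andbT.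
rewrite OpmulE UE ext_if2 extZXn; case: t => [|t] /=; first by rewrite andbF.
rewrite IH !vertS predE andbT scale_if2 scalerA mulr1 subSS.
by case: (vert t == vert j).
Qed.

Lemma WBE t : WB t = if vert t == i0 then
   (q t - (if (0 < t)%N then alpha i0 * q t.-1 else 0) - gamma i0) *: 'X^t else 0.
Proof.
rewrite /WB; simp2.
case: t => [|t] /=; rewrite ?andbT ?andbF /=.
  by case: (vert 0 == i0); rewrite /= ?subr0 ?addr0 // !scalerBl !mulr1.
case: (vert t =P ordS i0) => h /=.
  have -> : vert t.+1 == i0 by rewrite vertS h ordSK.
  by rewrite /= !mulr1 -!scalerBl.
have -> : (vert t.+1 == i0) = false.
  by apply/negbTE; apply: contra_notN h => /eqP <-; rewrite vertS ord_predK.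
by rewrite subr0 oppr0 addr0.
Qed.

Lemma WB_pos t : beta i0 = 0 -> (0 < t)%N -> WB t = 0.
Proof.
move=> hb; case: t => // t _; rewrite WBE /=.
case: (vert t.+1 =P i0) => h //.
by rewrite qS h hb mul0r addr0 (addrC (alpha i0 * q t)) addrK subrr scale0r.
Qed.

Lemma WB0 : WB 0 = 'X^0.
Proof. by rewrite WBE vert0 eqxx /= q0 subr0 (addrC (gamma i0)) addrK scale1r. Qed.

End Rep.

End Helpers.
Import Helpers.

Theorem lemma4p1 (k : closedFieldType) (hchar : [pchar k] =i pred0)
    (n : nat) (hn : (0 < n)%N) (alpha beta gamma : 'I_n -> k)
    (A : algType k) (e u d : 'I_n -> A)
    (hA : is_H_algebra alpha beta gamma e u d)
    (hbeta : exists i : 'I_n, beta i = 0) :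
  ~ noetherian A.
Proof.
case=> _ hR.
case: hA => _ _ _ huniv.
case: hbeta => i0 hb0.
have [f [[fl f1 fm] fgen]] := huniv (Op k) (E k i0) (U k i0) (Dn alpha beta gamma i0)
  (quiverE alpha beta gamma i0) (HrelsE alpha beta gamma i0).
have f0 : f 0 = 0.
  have := fl 1 0 0; rewrite scale1r addr0 scale1r => h.
  by apply: (@addrI _ (f 0)); rewrite addr0 -h.
have fD : forall x y, f (x + y) = f x + f y.
  by move=> x y; have := fl 1 x y; rewrite !scale1r.
have fZ : forall a x, f (a *: x) = a *: f x.
  by move=> a x; have := fl a x 0; rewrite !addr0 f0 addr0.
have fB : forall x y, f (x - y) = f x - f y.
  by move=> x y; rewrite fD -scaleN1r fZ scaleN1r.
pose P := fix P (j : nat) : A :=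
  match j with 0 => e i0 | j'.+1 => u (vert i0 j'.+1) * P j' end.
have fP : forall j, f (P j) = PB k i0 j.
  elim=> [|j IH] /=; first by case: (fgen i0).
  by rewrite fm IH; case: (fgen (vert i0 j.+1)) => _ -> _.
pose W : A := d (ord_pred i0) * u (ord_pred i0) - alpha i0 *: (u i0 * d i0)
   - gamma i0 *: e i0.
have fW : f W = WB alpha beta gamma i0.
  rewrite /W /WB !fB !fZ !fm.
  case: (fgen i0) => -> -> ->; case: (fgen (ord_pred i0)) => _ -> -> //.
have fX : forall j t, f (P j * W) t = ext (WB alpha beta gamma i0) (PB k i0 j t).
  by move=> j t; rewrite fm fP fW OpmulE.
pose N := fun (m : nat) (z : A) => forall t, (m < t)%N -> f z t = 0.
have [m0 hm0] : exists m0, forall m, (m0 <= m)%N -> forall x, N m x <-> N m0 x.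
  apply: hR.
  - move=> m; split.
    + by move=> t _; rewrite f0.
    + by move=> x y hx hy t ht; rewrite fD OpaddE hx // hy // addr0.
    + by move=> a x hx t ht; rewrite fm OpmulE hx // ext0.
  - by move=> m x hx t ht; apply: hx; apply: ltnW.
have hin : N m0.+1 (P m0.+1 * W).
  move=> t ht; rewrite fX PBE ext_if2 extZXn WB_pos ?scaler0 //; first by case: ifP.
  by rewrite subn_gt0.
have := (hm0 m0.+1 (leqnSn _) _).1 hin m0.+1 (ltnSn _).
rewrite fX PBE eqxx leqnn /= extZXn subnn WB0 scale1r => /eqP.
by rewrite expr0 oner_eq0.
Qed.
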